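(* Let $k\geq2$, $n>2\ell'_k$ and $p\in\{0,1,2\}^{[\![1,n]\!]^2}$. Let $\tau'_k=(\ell'_k,\ell'_k)$. Then $J^A(p,\ell'_k)\cap J^B(p,\ell'_k)=\varnothing$ and $$\tau'_k+I(p,\ell'_k)\subseteq J^A(p,\ell'_k)\sqcup J^B(p,\ell'_k).$$
   Context: Alphabet $\widetilde{\mathcal{A}}=\{0,1,2\}$. Let $(N_k)_{k\geq1}$ be integers with $N_k\geq4$, $\ell_0=2$, $\ell_k=N_k\ell_{k-1}$; let $N'_k\geq2$ be integers dividing $N_k$ with $N_k/N'_k\geq2$, and $\ell'_k=N'_k\ell_{k-1}$. Words: $a_0=01$, $b_0=02$; for odd $k\geq1$, $a_k=(a_{k-1})^{N_k}$ and $b_k=b_{k-1}2^{(N_k-2)\ell_{k-1}}b_{k-1}$; for even $k\geq2$, $a_k=a_{k-1}1^{(N_k-2)\ell_{k-1}}a_{k-1}$ and $b_k=(b_{k-1})^{N_k}$. $\widetilde L_k=\{a_k,1^{\ell_k},b_k,2^{\ell_k}\}$. For odd $k$: $\widetilde A'_k=\{(a_{k-1})^{N'_k},1^{\ell'_k}\}$, $\widetilde B'_k=\{b_{k-1}2^{(N'_k-1)\ell_{k-1}},\,2^{(N'_k-1)\ell_{k-1}}b_{k-1},\,2^{\ell'_k}\}$; for even $k$: $\widetilde A'_k=\{a_{k-1}1^{(N'_k-1)\ell_{k-1}},\,1^{(N'_k-1)\ell_{k-1}}a_{k-1},\,1^{\ell'_k}\}$, $\widetilde B'_k=\{(b_{k-1})^{N'_k},2^{\ell'_k}\}$.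 For a dictionary $L$ of words of length $\ell$, $\langle L\rangle=\{x\in\widetilde{\mathcal{A}}^{\mathbb{Z}}:\exists u\in[\![1,\ell]\!],\forall v\in\mathbb{Z},(\sigma^{u+\ell v}x)|_{[\![1,\ell]\!]}\in L\}$. $\widetilde X=\bigcap_{k\geq0}\langle\widetilde L_k\rangle$ and $\widetilde{\widetilde X}=\{x\in\widetilde{\mathcal{A}}^{\mathbb{Z}^2}:\exists\widetilde x\in\widetilde X,\ x(i,j)=\widetilde x(i)\ \forall(i,j)\}$ is its vertically aligned version; $\mathcal{L}(\widetilde{\widetilde X},m)$ denotes its patterns on $[\![1,m]\!]^2$. $\widetilde{\widetilde A}'_k$ (resp. $\widetilde{\widetilde B}'_k$) is the set of patterns $q\in\widetilde{\mathcal{A}}^{[\![1,\ell'_k]\!]^2}$ with $q(i,j)=\widetilde q(i)$ for some $\widetilde q\in\widetilde A'_k$ (resp. $\widetilde B'_k$). For $u\in\mathbb{Z}^2$, $\sigma^u(p)(v)=p(u+v)$. Define $I(p,\ell'_k)=\{u\in[\![0,n-2\ell'_k]\!]^2:(\sigma^u p)|_{[\![1,2\ell'_k]\!]^2}\in\mathcal{L}(\widetilde{\widetilde X},2\ell'_k)\}$, $I^A(p,\ell'_k)=\{u\in[\![0,n-\ell'_k]\!]^2:(\sigma^up)|_{[\![1,\ell'_k]\!]^2}\in\widetilde{\widetilde A}'_k\}$, $J^A(p,\ell'_k)=\bigcup_{u\in I^A(p,\ell'_k)}(u+[\![1,\ell'_k]\!]^2)$, and $I^B,J^B$ analogously with $\widetilde{\widetilde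 B}'_k$. *)

(* Defs.v *)
From Stdlib Require Import ZArith.
From mathcomp Require Import all_boot.
Set Implicit Arguments. Unset Strict Implicit. Unset Printing Implicit Defensive.

(* Letters of the alphabet {0,1,2} are represented by nat; words by seq nat. *)

Fixpoint ell (N : nat -> nat) (k : nat) : nat :=
  match k with 0 => 2 | k'.+1 => N k'.+1 * ell N k' end.

Definition ellp (N N' : nat -> nat) (k : nat) : nat := N' k * ell N k.-1.

Fixpoint words (N : nat -> nat) (k : nat) : seq nat * seq nat :=
  match k with
  | 0 => ([:: 0; 1], [:: 0; 2])
  | k'.+1 =>
      let a := (words N k').1 in
      let b := (words N k').2 in
      let m := N k'.+1 in
      let l := ell N k' in
      if odd k'.+1
      then (flatten (nseq m a), b ++ nseq ((m - 2) * l) 2 ++ b)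
      else (a ++ nseq ((m - 2) * l) 1 ++ a, flatten (nseq m b))
  end.

Definition aw N k := (words N k).1.
Definition bw N k := (words N k).2.

Definition dictL (N : nat -> nat) (k : nat) : seq (seq nat) :=
  [:: aw N k; nseq (ell N k) 1; bw N k; nseq (ell N k) 2].

Definition in_dict (L : seq (seq nat)) (l : nat) (x : Z -> nat) : Prop :=
  exists u : nat, 1 <= u <= l /\
    forall v : Z,
      [seq x (Z.of_nat u + Z.of_nat l * v + Z.of_nat i + 1)%Z | i <- iota 0 l] \in L.

Definition Xt (N : nat -> nat) (x : Z -> nat) : Prop :=
  forall k, in_dict (dictL N k) (ell N k) x.

(* q (a pattern on [1,m]^2, given as a function only relevant on the box)
   belongs to L(\widetilde{\widetilde X}, m): it is the restriction to [1,m]^2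
   of a vertically aligned configuration x(i,j) = xt(i), xt \in \widetilde X. *)
Definition LXX (N : nat -> nat) (m : nat) (q : nat -> nat -> nat) : Prop :=
  exists xt : Z -> nat, Xt N xt /\
    forall i j, 1 <= i <= m -> 1 <= j <= m -> q i j = xt (Z.of_nat i).

Definition Ap (N N' : nat -> nat) (k : nat) : seq (seq nat) :=
  let a := aw N k.-1 in
  let l := ell N k.-1 in
  if odd k then [:: flatten (nseq (N' k) a); nseq (ellp N N' k) 1]
  else [:: a ++ nseq ((N' k - 1) * l) 1; nseq ((N' k - 1) * l) 1 ++ a;
           nseq (ellp N N' k) 1].

Definition Bp (N N' : nat -> nat) (k : nat) : seq (seq nat) :=
  let b := bw N k.-1 in
  let l := ell N k.-1 in
  if odd k then [:: b ++ nseq ((N' k - 1) * l) 2; nseq ((N' k - 1) * l) 2 ++ b;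
                   nseq (ellp N N' k) 2]
  else [:: flatten (nseq (N' k) b); nseq (ellp N N' k) 2].

Definition inI (N N' : nat -> nat) (k n : nat) (p : nat -> nat -> nat) (u1 u2 : nat) : Prop :=
  u1 <= n - 2 * ellp N N' k /\ u2 <= n - 2 * ellp N N' k /\
  LXX N (2 * ellp N N' k) (fun i j => p (u1 + i) (u2 + j)).

Definition inIW (W : seq (seq nat)) (l n : nat) (p : nat -> nat -> nat) (u1 u2 : nat) : Prop :=
  u1 <= n - l /\ u2 <= n - l /\
  exists w, w \in W /\
    forall i j, 1 <= i <= l -> 1 <= j <= l -> p (u1 + i) (u2 + j) = nth 0 w (i - 1).

Definition inJW (W : seq (seq nat)) (l n : nat) (p : nat -> nat -> nat) (w1 w2 : nat) : Prop :=
  exists u1 u2, inIW W l n p u1 u2 /\ u1 < w1 <= u1 + l /\ u2 < w2 <= u2 + l.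

(* Main.v *)
Require Import Defs.
From Stdlib Require Import ZArith.
From mathcomp Require Import all_boot.
From mathcomp Require Import zify.
Set Implicit Arguments. Unset Strict Implicit.


Lemma size_flat (a : seq nat) m : size (flatten (nseq m a)) = m * size a.
Proof. elim: m => //= m IH; rewrite size_cat IH; lia. Qed.

Lemma nth_flat (a : seq nat) m q r : r < size a -> q < m ->
  nth 0 (flatten (nseq m a)) (q * size a + r) = nth 0 a r.
Proof.
elim: m q => // m IH [|q] hr hq /=; rewrite nth_cat.
  by rewrite mul0n add0n hr.
have -> : (q.+1 * size a + r < size a) = false by apply/negbTE; lia.
have -> : q.+1 * size a + r - size a = q * size a + r by rewrite mulSn; lia.
by apply: IH.
Qed.

Lemma words_S N k : words N k.+1 =
  (if odd k.+1
   then (flatten (nseq (N k.+1) (aw N k)), bw N k ++ nseq ((N k.+1 - 2) * ell N k) 2 ++ bw N k)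
   else (aw N k ++ nseq ((N k.+1 - 2) * ell N k) 1 ++ aw N k, flatten (nseq (N k.+1) (bw N k)))).
Proof. by []. Qed.

Lemma aw_S N k : aw N k.+1 = if odd k.+1 then flatten (nseq (N k.+1) (aw N k))
   else aw N k ++ nseq ((N k.+1 - 2) * ell N k) 1 ++ aw N k.
Proof. by rewrite /aw words_S; case: ifP. Qed.
Lemma bw_S N k : bw N k.+1 = if odd k.+1 then bw N k ++ nseq ((N k.+1 - 2) * ell N k) 2 ++ bw N k
   else flatten (nseq (N k.+1) (bw N k)).
Proof. by rewrite /bw words_S; case: ifP. Qed.

Lemma ell_S N k : ell N k.+1 = N k.+1 * ell N k.
Proof. by []. Qed.

Lemma sizes N (hN : forall k, 1 <= k -> 2 <= N k) k :
  size (aw N k) = ell N k /\ size (bw N k) = ell N k.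
Proof.
elim: k => [|k [IHa IHb]]; first by [].
have h := hN k.+1 isT.
rewrite aw_S bw_S ell_S; case: ifP => _;
  rewrite ?size_flat ?size_cat ?size_nseq ?IHa ?IHb; split => //; nia.
Qed.

Lemma ell_pos N (hN : forall k, 1 <= k -> 2 <= N k) k : 0 < ell N k.
Proof. elim: k => // k IH; rewrite ell_S; have := hN k.+1 isT; nia. Qed.

Lemma all_flat (P : pred nat) a m : all P a -> all P (flatten (nseq m a)).
Proof. by move=> h; elim: m => //= m IH; rewrite all_cat h IH. Qed.

Lemma letters N k : all (fun c => c != 2) (aw N k) /\ all (fun c => c != 1) (bw N k).
Proof.
elim: k => [|k [IHa IHb]]; first by [].
rewrite aw_S bw_S; case: ifP => _; rewrite ?all_cat ?all_flat ?IHa ?IHb //=;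
  split => //; by rewrite all_nseq orbT.
Qed.

Lemma lastP1 (x c : nat) a m : (forall y, last y a = c) -> 0 < m -> last x (flatten (nseq m a)) = c.
Proof.
move=> h; case: m => // m _; elim: m x => [|m IH] x /=; first by rewrite cats0.
by rewrite last_cat IH.
Qed.

Lemma last_nseq_c (x c : nat) m : 0 < m -> last x (nseq m c) = c.
Proof. by case: m => // m _; elim: m x => //= m IH x; rewrite IH. Qed.

Lemma lastw N (hN : forall k, 1 <= k -> 2 <= N k) k :
  (forall y, last y (aw N k) = 1) /\ (forall y, last y (bw N k) = 2).
Proof.
elim: k => [|k [IHa IHb]]; first by [].
have h := hN k.+1 isT.
rewrite aw_S bw_S; case: ifP => _; split => y;
  rewrite ?last_cat ?IHa ?IHb //; apply: lastP1 => //; lia.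
Qed.



Section P1.
Variables (N N' : nat -> nat) (hN : forall k, 1 <= k -> 2 <= N k) (k : nat)
  (hk : 1 <= k) (hN2 : 2 <= N' k).

Lemma nth_all (P : pred nat) (w : seq nat) i : P 0 -> all P w -> P (nth 0 w i).
Proof.
move=> h0 ha; case: (ltnP i (size w)) => hi; first by apply: (allP ha); apply: mem_nth.
by rewrite nth_default.
Qed.

Lemma Ap_no2 w i : w \in Ap N N' k -> nth 0 w i != 2.
Proof.
have [ha _] := letters N k.-1.
move: w; apply/allP; rewrite /Ap; case: ifP => _ /=; rewrite ?andbT;
  repeat (apply/andP; split); apply: (nth_all (P := fun c => c != 2)) => //;
  rewrite ?all_cat ?all_flat ?ha ?all_nseq ?orbT //.
Qed.

Lemma Bp_no1 w i : w \in Bp N N' k -> nth 0 w i != 1.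
Proof.
have [_ hb] := letters N k.-1.
move: w; apply/allP; rewrite /Bp; case: ifP => _ /=; rewrite ?andbT;
  repeat (apply/andP; split); apply: (nth_all (P := fun c => c != 1)) => //;
  rewrite ?all_cat ?all_flat ?hb ?all_nseq ?orbT //.
Qed.

Lemma Ap_last w : w \in Ap N N' k -> nth 0 w (ellp N N' k - 1) = 1.
Proof.
have [sa _] := sizes hN k.-1. have [la _] := lastw hN k.-1.
have hp := ell_pos hN k.-1.
move=> hw; suff /andP[/eqP <- ] : (size w == ellp N N' k) && (last 0 w == 1).
  by rewrite subn1 nth_last => /eqP.
rewrite /ellp; move: w hw; apply/allP; rewrite /Ap; case: ifP => _ /=; rewrite ?andbT;
  rewrite /ellp; repeat (apply/andP; split); apply/eqP;
  rewrite ?size_flat ?size_cat ?size_nseq ?sa ?last_cat ?la; try nia;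
  try (apply: lastP1; by [|lia]); try (apply: last_nseq_c; nia).
Qed.

Lemma Bp_last w : w \in Bp N N' k -> nth 0 w (ellp N N' k - 1) = 2.
Proof.
have [_ sa] := sizes hN k.-1. have [_ la] := lastw hN k.-1.
have hp := ell_pos hN k.-1.
move=> hw; suff /andP[/eqP <- ] : (size w == ellp N N' k) && (last 0 w == 2).
  by rewrite subn1 nth_last => /eqP.
rewrite /ellp; move: w hw; apply/allP; rewrite /Bp; case: ifP => _ /=; rewrite ?andbT;
  rewrite /ellp; repeat (apply/andP; split); apply/eqP;
  rewrite ?size_flat ?size_cat ?size_nseq ?sa ?last_cat ?la; try nia;
  try (apply: lastP1; by [|lia]); try (apply: last_nseq_c; nia).
Qed.

Lemma part1 n p w1 w2 : ~ (inJW (Ap N N' k) (ellp N N' k) n p w1 w2 /\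
                    inJW (Bp N N' k) (ellp N N' k) n p w1 w2).
Proof.
set l := ellp N N' k.
move=> [[a1 [a2 [[_ [_ [wa [hwa ea]]]] [ha1 ha2]]]] [b1 [b2 [[_ [_ [wb [hwb eb]]]] [hb1 hb2]]]]].
have hl : 0 < l by rewrite /l /ellp; have := ell_pos hN k.-1; nia.
case: (leqP a1 b1) => hab.
- have e1 := ea l (w2 - a2) ltac:(lia) ltac:(lia).
  have e2 := eb (a1 + l - b1) (w2 - b2) ltac:(lia) ltac:(lia).
  have EE : a1 + l = b1 + (a1 + l - b1) by lia. rewrite EE in e1; clear EE.
  have EE : a2 + (w2 - a2) = b2 + (w2 - b2) by lia. rewrite EE in e1; clear EE.
  rewrite e2 Ap_last // in e1.
  by move: (Bp_no1 (a1 + l - b1 - 1) hwb); rewrite e1.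
- have e1 := eb l (w2 - b2) ltac:(lia) ltac:(lia).
  have e2 := ea (b1 + l - a1) (w2 - a2) ltac:(lia) ltac:(lia).
  have EE : b1 + l = a1 + (b1 + l - a1) by lia. rewrite EE in e1; clear EE.
  have EE : b2 + (w2 - b2) = a2 + (w2 - a2) by lia. rewrite EE in e1; clear EE.
  rewrite e2 Bp_last // in e1.
  by move: (Ap_no2 (b1 + l - a1 - 1) hwa); rewrite e1.
Qed.
End P1.



Lemma flat_win (a : seq nat) M M' j0 i : 0 < size a -> j0 + M' <= M -> i < M' * size a ->
  nth 0 (flatten (nseq M' a)) i = nth 0 (flatten (nseq M a)) (j0 * size a + i).
Proof.
move=> hs hj hi.
have hd := divn_eq i (size a). have hr := ltn_pmod i hs.
have hq : i %/ size a < M'.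
  rewrite ltn_divLR //.
have E : j0 * size a + i = (j0 + i %/ size a) * size a + i %% size a.
  rewrite {1}hd mulnDl; lia.
rewrite E {1}hd !nth_flat //; lia.
Qed.

Lemma nseq_win c M M' s j0 i : j0 + M' <= M -> i < M' * s ->
  nth 0 (nseq (M' * s) c) i = nth 0 (nseq (M * s) c) (j0 * s + i).
Proof.
move=> hj hi; rewrite !nth_nseq hi.
have -> : j0 * s + i < M * s by nia.
by [].
Qed.

Lemma cat_win (b : seq nat) c M M' s j0 : size b = s -> 0 < s -> 2 <= M' -> 2 * M' <= M ->
  j0 + M' <= M -> exists w, w \in [:: b ++ nseq ((M' - 1) * s) c; nseq ((M' - 1) * s) c ++ b;
    nseq (M' * s) c] /\
  forall i, i < M' * s -> nth 0 w i = nth 0 (b ++ nseq ((M - 2) * s) c ++ b) (j0 * s + i).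
Proof.
move=> hb hs h2 h2M hj.
have [E1 E2] : (M' - 1) * s = M' * s - s /\ (M - 2) * s = M * s - 2 * s by split; nia.
case: (posnP j0) => [->|hj0].
  exists (b ++ nseq ((M' - 1) * s) c); split; first by rewrite inE eqxx.
  move=> i hi; rewrite mul0n add0n !nth_cat !size_nseq !nth_nseq hb.
  case: ifP => // /negbT; rewrite -leqNgt => his.
  have -> : i - s < (M' - 1) * s by nia.
  have -> : i - s < (M - 2) * s by nia.
  by [].
case: (eqVneq (j0 + M') M) => hjM.
  exists (nseq ((M' - 1) * s) c ++ b); split; first by rewrite !inE eqxx orbT.
  move=> i hi; rewrite !nth_cat !size_nseq !nth_nseq hb.
  have -> : (j0 * s + i < s) = false by apply/negbTE; nia.
  case: ifP => hi1.
    have -> : j0 * s + i - s < (M - 2) * s by nia.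
    by rewrite hi1.
  have -> : (j0 * s + i - s < (M - 2) * s) = false by apply/negbTE; nia.
  congr nth; nia.
exists (nseq (M' * s) c); split; first by rewrite !inE eqxx !orbT.
move=> i hi; rewrite !nth_cat !size_nseq !nth_nseq hb hi.
have -> : (j0 * s + i < s) = false by apply/negbTE; nia.
have -> : j0 * s + i - s < (M - 2) * s.
  have : j0 + M' < M by rewrite ltn_neqAle hjM hj.
  nia.
by [].
Qed.



Lemma word_win N N' (hN : forall k, 1 <= k -> 2 <= N k) k' W j0 :
  2 <= N' k'.+1 -> 2 * N' k'.+1 <= N k'.+1 ->
  W \in dictL N k'.+1 -> j0 + N' k'.+1 <= N k'.+1 ->
  exists w, (w \in Ap N N' k'.+1 \/ w \in Bp N N' k'.+1) /\
    forall i, i < ellp N N' k'.+1 -> nth 0 w i = nth 0 W (j0 * ell N k' + i).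
Proof.
move=> h2 h2M hW hj.
have [sa sb] := sizes hN k'.
have hs := ell_pos hN k'.
rewrite /ellp /Ap /Bp /= -/(ell N k'.+1).
have hW' : W = aw N k'.+1 \/ W = nseq (ell N k'.+1) 1 \/ W = bw N k'.+1 \/ W = nseq (ell N k'.+1) 2.
  move: hW; rewrite /dictL !inE => /orP[/eqP->|/orP[/eqP->|/orP[/eqP->|/eqP->]]]; tauto.
rewrite aw_S bw_S ell_S in hW'.
rewrite /= in hW'; case: (odd k') hW' => /= hW'; rewrite /ellp [k'.+1.-1]/=.
- case: hW' => [->|[->|[->|->]]].
  + have [w [hw hw2]] := cat_win 1 sa hs h2 h2M hj.
    by exists w; split => //; left.
  + exists (nseq (N' k'.+1 * ell N k') 1); split; first by left; rewrite !inE eqxx !orbT.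
    by move=> i hi; apply: nseq_win.
  + exists (flatten (nseq (N' k'.+1) (bw N k'))); split; first by right; rewrite inE eqxx.
    move=> i hi; rewrite -sb; apply: flat_win; rewrite ?sb //.
  + exists (nseq (N' k'.+1 * ell N k') 2); split; first by right; rewrite !inE eqxx !orbT.
    by move=> i hi; apply: nseq_win.
- case: hW' => [->|[->|[->|->]]].
  + exists (flatten (nseq (N' k'.+1) (aw N k'))); split; first by left; rewrite inE eqxx.
    move=> i hi; rewrite -sa; apply: flat_win; rewrite ?sa //.
  + exists (nseq (N' k'.+1 * ell N k') 1); split; first by left; rewrite !inE eqxx orbT.
    by move=> i hi; apply: nseq_win.
  + have [w [hw hw2]] := cat_win 2 sb hs h2 h2M hj.
    by exists w; split => //; right.
  + exists (nseq (N' k'.+1 * ell N k') 2); split; first by right; rewrite !inE eqxx !orbT.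
    by move=> i hi; apply: nseq_win.
Qed.



Lemma part2 N N' (hN : forall k, 1 <= k -> 2 <= N k) k' (h2 : 2 <= N' k'.+1)
  (h2M : 2 * N' k'.+1 <= N k'.+1) n (hn : 2 * ellp N N' k'.+1 < n) p u1 u2 :
  inI N N' k'.+1 n p u1 u2 ->
     inJW (Ap N N' k'.+1) (ellp N N' k'.+1) n p (ellp N N' k'.+1 + u1) (ellp N N' k'.+1 + u2) \/
     inJW (Bp N N' k'.+1) (ellp N N' k'.+1) n p (ellp N N' k'.+1 + u1) (ellp N N' k'.+1 + u2).
Proof.
move=> [hu1 [hu2 [xt [hX hxt]]]].
have hs := ell_pos hN k'.
have El : ellp N N' k'.+1 = N' k'.+1 * ell N k' by [].
have EL : ell N k'.+1 = N k'.+1 * ell N k' by [].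
set l := ellp N N' k'.+1 in hn hu1 hu2 hxt El *.
set L := ell N k'.+1 in EL.
set s := ell N k' in hs El EL.
have [u [hu hv]] := hX k'.+1.
rewrite -/L in hu hv.
have hlL : l <= L by rewrite El EL leq_mul2r; lia.
have [v [i [hiL hvi]]] : exists v i, i < L /\
    (Z.of_nat u + Z.of_nat L * v = Z.of_nat l - 1 - Z.of_nat i)%Z.
  case: (leqP u (l - 1)) => hul.
    by exists 0%Z, (l - 1 - u); split; lia.
  by exists (-1)%Z, (l - 1 + L - u); split; lia.
have hW := hv v.
set W := map _ _ in hW.
have nthW : forall i', i' < L -> nth 0 W i' =
    xt (Z.of_nat u + Z.of_nat L * v + Z.of_nat i' + 1)%Z.
  move=> i' hi'; rewrite /W (nth_map 0) ?size_iota // nth_iota //.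
have hd := divn_eq i s. have hr := ltn_pmod i hs.
set j := i %/ s in hd. set r := i %% s in hd hr.
have hjN : j < N k'.+1 by rewrite /j ltn_divLR // -EL.
pose j0 := if j + N' k'.+1 <= N k'.+1 then j else j.+1 - N' k'.+1.
have [hj0 ht1 ht2] : [/\ j0 + N' k'.+1 <= N k'.+1, i <= j0 * s + (l - 1) &
    j0 * s + (l - 1) - i <= l - 1].
  have hls : s <= l by rewrite El; nia.
  rewrite /j0; case: ifP => hc.
    split => //; lia.
  have E : (j.+1 - N' k'.+1) * s = j * s + s - N' k'.+1 * s by nia.
  have hjN' : N' k'.+1 <= j by lia.
  have hjs : N' k'.+1 * s <= j * s by rewrite leq_mul2r hjN' orbT.
  rewrite E; split; lia.
set t := j0 * s + (l - 1) - i.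
have [w [hw hwn]] := word_win hN h2 h2M hW hj0.
rewrite -/l -/s in hwn.
suff HI : forall X, w \in X -> inJW X l n p (l + u1) (l + u2).
  by case: hw => hw; [left | right]; apply: HI.
move=> X hwX; exists (u1 + t), u2; split; last by lia.
split; first by lia. split; first by lia.
exists w; split => // i' j' hi' hj'.
have -> : u1 + t + i' = u1 + (t + i') by lia.
rewrite hxt; try lia.
rewrite -(subnK (proj1 (andP hi'))) hwn; last by lia.
rewrite nthW; last by nia.
congr xt; lia.
Qed.


Theorem lemma3p5 (N N' : nat -> nat)
  (hN : forall k, 1 <= k -> 4 <= N k)
  (hN' : forall k, 1 <= k -> [/\ 2 <= N' k, N' k %| N k & 2 <= N k %/ N' k])
  (k : nat) (hk : 2 <= k) (n : nat) (hn : 2 * ellp N N' k < n)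
  (p : nat -> nat -> nat)
  (hp : forall i j, 1 <= i <= n -> 1 <= j <= n -> p i j < 3) :
  (forall w1 w2, ~ (inJW (Ap N N' k) (ellp N N' k) n p w1 w2 /\
                    inJW (Bp N N' k) (ellp N N' k) n p w1 w2)) /\
  (forall u1 u2, inI N N' k n p u1 u2 ->
     inJW (Ap N N' k) (ellp N N' k) n p (ellp N N' k + u1) (ellp N N' k + u2) \/
     inJW (Bp N N' k) (ellp N N' k) n p (ellp N N' k + u1) (ellp N N' k + u2)).
Proof.
have hN2 : forall k, 1 <= k -> 2 <= N k by move=> j hj; have := hN j hj; lia.
have hk1 : 1 <= k by lia.
have [h2 hdv hq] := hN' k hk1.
have h2M : 2 * N' k <= N k.
  by rewrite -(divnK hdv) leq_mul2r hq orbT.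
split.
  move=> w1 w2; exact: (part1 hN2 hk1 h2).
case: k hk hk1 hn h2 hdv hq h2M => // k' _ _ hn h2 _ _ h2M u1 u2.
exact: (@part2 N N' hN2 k' h2 h2M n hn p u1 u2).
Qed.
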